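(* Let $n\ge1$ and $0\le k\le n-1$, and let $(\pi,S)\in\mathcal{B}^{>}_{n-1,k}$. Then (a) $\mathrm{fmaj}(\phi^{|}_{n,k}(i,(\pi,S)))=\mathrm{fmaj}((\pi,S))+2i$ for every $i\in\{0,1,\dots,n-k-1\}$; (b) $\mathrm{fmaj}(\phi^{|}_{\overline{n},k}(i,(\pi,S)))=\mathrm{fmaj}((\pi,S))+2i-1$ for every $i\in\{1,\dots,n-k-1\}$; (c) $\mathrm{fmaj}(\phi^{|}_{\overline{n},k}(0,(\pi,S)))=\mathrm{fmaj}((\pi,S))+2n-2k-1$.
   Context: $\mathcal{B}_m$ is the group of signed permutations of $[m]$ (bijections $\pi$ of $\{\pm1,\dots,\pm m\}$ with $\pi(-i)=-\pi(i)$, written $\pi=\pi_1\cdots\pi_m$), integers ordered naturally, $\overline{x}=-x$. Set $\pi_0=0$; $\mathrm{Des}_B(\pi)=\{i\in\{0,\dots,m-1\}:\pi_i>\pi_{i+1}\}$, $\mathrm{neg}(\pi)=|\{i:\pi_i<0\}|$, $\mathrm{fmaj}(\pi)=\sum_{i\in\mathrm{Des}_B(\pi)}2i+\mathrm{neg}(\pi)$. Let $\mathcal{B}^{>}_{m,k}=\{(\pi,S):\pi\in\mathcal{B}_m,\ S\subseteq\mathrm{Des}_B(\pi),\ |S|=k\}$ and for $(\pi,S)\in\mathcal{B}^{>}_{m,k}$, $\mathrm{fmaj}((\pi,S))=\mathrm{fmaj}(\pi)-\sum_{j\in S}\bigl(2|\mathrm{Des}_B(\pi)\cap\{j,\dots,m-1\}|-1\bigr)$.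 Positions: for $p\in\{0,1,\dots,m\}$, position $p$ of $\pi$ is the space immediately after $\pi_p$ (position $0$ is before $\pi_1$, position $m$ is at the end). The fmaj-labelling of $(\pi,S)\in\mathcal{B}^{>}_{m,k}$ labels the positions not in $S$ as follows: position $m$ gets label $0$; the positions in $\mathrm{Des}_B(\pi)\setminus S$ get labels $1,2,\dots$ in order from right to left (decreasing position); the remaining unlabelled positions in $\{0,\dots,m-1\}\setminus\mathrm{Des}_B(\pi)$ get the next consecutive labels in order from left to right. Thus the labels are $0,1,\dots,m-k$. Insertion: for $\alpha\in\{n,\overline{n}\}$ and $(\pi,S)\in\mathcal{B}^{>}_{n-1,k}$ and a label $i$, let $p$ be the position of $(\pi,S)$ with label $i$, and let $\tau=\pi_1\cdots\pi_p\,\alpha\,\pi_{p+1}\cdots\pi_{n-1}\in\mathcal{B}_n$. Starred positions $j\in S$ with $j<p$ remain starred at $j$; each starred position $j\in S$ with $j>p$ (which corresponds to the descent $j+1$ of $\tau$) is moved one descent to the left, i.e. replaced by the largest element of $\mathrm{Des}_B(\tau)$ smaller than $j+1$. Let $T$ be the resulting set of starred positions. Define $\phi^{|}_{\alpha,k}(i,(\pi,S))=(\tau,T)$, a map $\{0,1,\dots,n-k-1\}\times\mathcal{B}^{>}_{n-1,k}\to\mathcal{B}^{>}_{n,k}$. *)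

(* Defs.v *)
(* Signed permutations are represented by their window
   notation pi_1 ... pi_m as a sequence of (nonzero) integers. *)
From HB Require Import structures.
From mathcomp Require Import all_boot all_order all_algebra.
Set Implicit Arguments. Unset Strict Implicit. Unset Printing Implicit Defensive.
Import Order.TTheory GRing.Theory Num.Theory.

Local Open Scope ring_scope.

Definition is_signed_perm (m : nat) (s : seq int) : bool :=
  (size s == m) && perm_eq (map absz s) (iota 1 m).

(* pi_i, with the convention pi_0 = 0 *)
Definition pi_at (s : seq int) (i : nat) : int :=
  if i is j.+1 then nth 0 s j else 0.

Definition desB (s : seq int) : seq nat :=
  [seq i <- iota 0 (size s) | pi_at s i.+1 < pi_at s i].

Definition negB (s : seq int) : nat := count (fun x : int => x < 0) s.

Definition fmajB (s : seq int) : nat :=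
  (\sum_(i <- desB s) i.*2 + negB s)%N.

(* fmaj((pi,S)) = fmaj(pi) - sum_{j in S} (2 |Des_B(pi) cap {j,...,m-1}| - 1),
   computed in int; S is a finite set of naturals given by a list
   (duplicates are ignored). *)
Definition fmajP (s : seq int) (S : seq nat) : int :=
  (fmajB s)%:Z
  - \sum_(j <- undup S) ((2 * count (fun d => j <= d) (desB s))%N%:Z - 1).

Definition in_Bgt (m k : nat) (s : seq int) (S : seq nat) : Prop :=
  [/\ is_signed_perm m s, uniq S, {subset S <= desB s} & size S = k].

(* The positions not in S, listed in order of their fmaj-label:
   position m (label 0), then Des_B(pi)\S from right to left, then
   the non-descent positions of {0,...,m-1} from left to right. *)
Definition label_positions (s : seq int) (S : seq nat) : seq nat :=
  size s :: rev [seq p <- desB s | p \notin S]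
         ++ [seq p <- iota 0 (size s) | p \notin desB s].

Definition pos_of_label (s : seq int) (S : seq nat) (i : nat) : nat :=
  nth 0 (label_positions s S) i.

Definition phi_ins (alpha : int) (i : nat) (s : seq int) (S : seq nat)
  : seq int * seq nat :=
  let p := pos_of_label s S i in
  let tau := take p s ++ alpha :: drop p s in
  let move j := if (j < p)%N then j
                 else \max_(d <- desB tau | (d < j.+1)%N) d in
  (tau, undup [seq move j | j <- S]).

(* Main.v *)
Require Import Defs.
From mathcomp Require Import all_boot all_order all_algebra zify.
Import Order.TTheory GRing.Theory Num.Theory.

Lemma pi_at_bound m s i : is_signed_perm m s -> (`|pi_at s i| <= m)%N.
Proof.
case/andP=> _ hp; case: i => [|j] //=.
case: (ltnP j (size s)) => h; last by rewrite nth_default.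
have : absz (nth 0%R s j) \in iota 1 m by rewrite -(perm_mem hp); apply: map_f; apply: mem_nth.
rewrite mem_iota; move: (absz _) => x /andP[]; lia.
Qed.

Lemma pi_at_ins s p (al : int) i : (p <= size s)%N ->
  pi_at (take p s ++ al :: drop p s) i =
  if (i <= p)%N then pi_at s i else if i == p.+1 then al else pi_at s i.-1.
Proof.
move=> hp; case: i => [|j] //=.
rewrite nth_cat size_take_min (minn_idPl hp) eqSS.
case: (ltnP j p) => hj.
  by rewrite nth_take.
case: (eqVneq j p) => [->|hjp]; first by rewrite subnn.
have -> : (j - p = (j - p).-1.+1)%N by lia.
rewrite /= nth_drop; case: j hj hjp => [|j] hj hjp /=; first lia.
by congr nth; lia.
Qed.

Definition Pd (s : seq int) (i : nat) : bool := (pi_at s i.+1 < pi_at s i)%R.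

Lemma desBE s : desB s = filter (Pd s) (iota 0 (size s)).
Proof. by []. Qed.

Lemma desB_split s p : (p < size s)%N ->
  desB s = filter (Pd s) (iota 0 p) ++ (if Pd s p then [:: p] else [::])
           ++ filter (Pd s) (iota p.+1 (size s - p.+1)).
Proof.
move=> hp; rewrite desBE.
have -> : size s = (p + (1 + (size s - p.+1)))%N by lia.
rewrite iotaD iotaD filter_cat filter_cat /= add0n addn1.
by congr (_ ++ _); case: (Pd s p); congr (_ ++ _); congr filter; congr iota; lia.
Qed.

Section Ins.
Variables (s : seq int) (p : nat) (al : int) (a : bool).
Hypothesis hlt : forall i, (al < pi_at s i)%R = a.
Hypothesis hgt : forall i, (pi_at s i < al)%R = ~~ a.
Let tau := take p s ++ al :: drop p s.

Lemma size_tau : (p <= size s)%N -> size tau = (size s).+1.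
Proof. by move=> hp; rewrite size_cat /= size_take_min size_drop; lia. Qed.

Lemma desB_ins_lt : (p < size s)%N ->
  desB tau = filter (Pd s) (iota 0 p) ++ (if a then p else p.+1)
     :: map succn (filter (Pd s) (iota p.+1 (size s - p.+1))).
Proof.
move=> hp; rewrite desBE size_tau ?(ltnW hp) //.
have -> : (size s).+1 = (p + (1 + (1 + (size s - p.+1))))%N by lia.
rewrite iotaD iotaD iotaD !filter_cat /= add0n.
have E1 : filter (Pd tau) (iota 0 p) = filter (Pd s) (iota 0 p).
  apply: eq_in_filter => x; rewrite mem_iota => hx.
  have h1 : (x.+1 <= p)%N by lia.
  have h2 : (x <= p)%N by lia.
  by rewrite /Pd !pi_at_ins ?(ltnW hp) // h1 h2.
have E2 : Pd tau p = a.
  rewrite /Pd !pi_at_ins ?(ltnW hp) // leqnn ltnn eqxx; exact: hlt.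
have E3 : Pd tau (p + 1) = ~~ a.
  rewrite /Pd !pi_at_ins ?(ltnW hp) // addn1 ltnn eqxx.
  have -> : (p.+2 <= p)%N = false by lia.
  have -> : (p.+2 == p.+1) = false by lia.
  exact: hgt.
have E4 : filter (Pd tau) (iota (p + 1 + 1) (size s - p.+1)) =
          map succn (filter (Pd s) (iota p.+1 (size s - p.+1))).
  have -> : iota (p + 1 + 1) (size s - p.+1) = map succn (iota p.+1 (size s - p.+1)).
    rewrite (_ : (p + 1 + 1 = 1 + p.+1)%N); last by lia.
    by rewrite iotaDl; apply: eq_map => x; rewrite add1n.
  rewrite filter_map; congr map; apply: eq_in_filter => x; rewrite mem_iota => hx.
  rewrite /= /Pd !pi_at_ins ?(ltnW hp) //.
  have -> : (x.+2 <= p)%N = false by lia.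
  have -> : (x.+1 <= p)%N = false by lia.
  have -> : (x.+2 == p.+1) = false by lia.
  have -> : (x.+1 == p.+1) = false by lia.
  by [].
rewrite E1 E2 E3 E4; case: a => /=; by rewrite ?addn1.
Qed.

Lemma desB_ins_eq : p = size s ->
  desB tau = filter (Pd s) (iota 0 p) ++ (if a then [:: p] else [::]).
Proof.
move=> hp; have hp' : (p <= size s)%N by rewrite hp.
rewrite desBE size_tau //.
rewrite -addn1 iotaD filter_cat /= add0n.
have E1 : filter (Pd tau) (iota 0 (size s)) = filter (Pd s) (iota 0 (size s)).
  apply: eq_in_filter => x; rewrite mem_iota => hx.
  have h1 : (x.+1 <= p)%N by rewrite hp; lia.
  have h2 : (x <= p)%N by rewrite hp; lia.
  by rewrite /Pd !pi_at_ins // h1 h2.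
have E2 : Pd tau (size s) = a.
  rewrite /Pd !pi_at_ins // -hp leqnn ltnn eqxx; exact: hlt.
by rewrite E1 E2 hp; case: a.
Qed.

Lemma negB_ins : negB tau = (negB s + a)%N.
Proof.
rewrite /negB count_cat /= -(hlt 0) /=.
rewrite -{3}(cat_take_drop p s) count_cat; lia.
Qed.

End Ins.

Lemma count_split (T : Type) (a b : pred T) (s : seq T) :
  count a s = (count (fun x => a x && b x) s + count (fun x => a x && ~~ b x) s)%N.
Proof. elim: s => //= x s ->; case: (a x); case: (b x) => /=; lia. Qed.

Lemma bigmax_mem (r : seq nat) (P : pred nat) : has P r ->
  (\max_(i <- r | P i) i \in r) && P (\max_(i <- r | P i) i).
Proof.
elim: r => //= x r IH; rewrite big_cons.
case Px: (P x) => /=.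
  move=> _; case hr: (has P r).
    case/andP: (IH hr) => h1 h2.
    case: (leqP x (\max_(j <- r | P j) j)) => hx.
      by rewrite inE h1 orbT h2.
    by rewrite inE eqxx Px.
  rewrite big_hasC ?hr // maxn0 inE eqxx; exact: Px.
move=> hr; case/andP: (IH hr) => h1 h2; by rewrite inE h1 orbT h2.
Qed.

Lemma max_count (D : seq nat) j : sorted ltn D -> has (fun d => d < j.+1) D ->
  count (fun d => \max_(d <- D | d < j.+1) d <= d) D = (count (fun d => j.+1 <= d) D).+1.
Proof.
move=> hs hh; set mu := \max_(d <- D | d < j.+1) d.
case/andP: (bigmax_mem _ _ hh) => hmu hmuj; rewrite -/mu in hmu hmuj.
have hle : forall d, d \in D -> d < j.+1 -> d <= mu.
  by move=> d hd hdj; exact: (@leq_bigmax_seq _ D (fun d => d < j.+1) (fun d => d) d hd hdj).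
have hu : uniq D by apply: (sorted_uniq ltn_trans ltnn).
rewrite (count_split _ _ (fun d => d <= j)).
have -> : count (fun d => (mu <= d) && (d <= j)) D = count (pred1 mu) D.
  apply: eq_in_count => d hd /=.
  apply/andP/eqP => [[h1 h2]|->]; last by rewrite leqnn -ltnS.
  by apply/eqP; rewrite eqn_leq h1 hle.
rewrite (count_uniq_mem _ hu) hmu.
have -> : count (fun d => (mu <= d) && ~~ (d <= j)) D = count (fun d => j.+1 <= d) D.
  apply: eq_count => d /=; rewrite -ltnNge; apply/andP/idP => [[]//|h].
  by split => //; apply: leq_trans h; apply: ltnW.
by rewrite add1n.
Qed.

Lemma cnt_sub (A B : seq nat) (q : pred nat) : uniq A -> uniq B -> {subset A <= B} ->
  count (fun x => q x && (x \in A)) B = count q A.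
Proof.
move=> uA uB sAB.
have -> : count (fun x => q x && (x \in A)) B = count q (filter (mem A) B).
  by rewrite count_filter.
apply/permP; apply: uniq_perm; first exact: filter_uniq.
  exact: uA.
move=> x; rewrite mem_filter; apply/andP/idP => [[]//|h]; split => //; exact: sAB.
Qed.

Open Scope ring_scope.
Lemma sum_shift (S : seq nat) (f g d : nat -> nat) :
  (forall j, j \in S -> f j = (g j + d j)%N) ->
  \sum_(j <- S) ((2 * f j)%N%:Z - 1) =
  \sum_(j <- S) ((2 * g j)%N%:Z - 1) + (2 * \sum_(j <- S) d j)%N%:Z.
Proof.
elim: S => [|x S IH] h; first by rewrite !big_nil.
rewrite !big_cons IH; last by move=> j hj; apply: h; rewrite inE hj orbT.
rewrite h ?inE ?eqxx //.
move: (\sum_(j <- S) _) (\sum_(j <- S) d j) (g x) (d x) => A B C E. lia.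
Qed.
Close Scope ring_scope.

Lemma sum_succ2 (R : seq nat) :
  \sum_(i <- map succn R) i.*2 = \sum_(i <- R) i.*2 + 2 * size R.
Proof. elim: R => [|x R IH]; rewrite ?big_nil // !big_cons IH /=; lia. Qed.

Lemma sum_delta (S : seq nat) p c : p \notin S ->
  \sum_(j <- S) (if j < p then c else 1) = c * count (fun j => j < p) S + count (fun j => p < j) S.
Proof.
elim: S => [|x S IH]; rewrite ?big_nil ?muln0 // inE negb_or => /andP[hx hS].
rewrite big_cons IH //= .
case: (ltnP x p) => h1.
  have -> : p < x = false by lia. lia.
have -> : p < x by move: hx; rewrite eq_sym; lia. lia.
Qed.

Definition mvf (s : seq int) p (al : int) j :=
  if j < p then j else \max_(d <- desB (take p s ++ al :: drop p s) | d < j.+1) d.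

Lemma sorted_desB s : sorted ltn (desB s).
Proof. rewrite desBE; apply: sorted_filter; [exact: ltn_trans| exact: iota_ltn_sorted]. Qed.

Lemma count0 (L : seq nat) (q : pred nat) : (forall x, x \in L -> ~~ q x) -> count q L = 0.
Proof. move=> h; apply/eqP; rewrite -leqn0 leqNgt -has_count; apply/hasP => -[x hx qx]. by move: (h x hx); rewrite qx. Qed.

Lemma countT (L : seq nat) (q : pred nat) : (forall x, x \in L -> q x) -> count q L = size L.
Proof. by move=> h; apply/eqP; rewrite -all_count; apply/allP. Qed.

Section Core.
Variables (s : seq int) (S : seq nat) (p : nat) (al : int) (a : bool).
Hypothesis uS : uniq S.
Hypothesis sS : {subset S <= desB s}.
Hypothesis pS : p \notin S.
Hypothesis hlt : forall i, (al < pi_at s i)%R = a.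
Hypothesis hgt : forall i, (pi_at s i < al)%R = ~~ a.
Hypothesis hp : p < size s.

Let tau := take p s ++ al :: drop p s.
Let L1 := filter (Pd s) (iota 0 p).
Let R := filter (Pd s) (iota p.+1 (size s - p.+1)).
Let e := if a then p else p.+1.

Let HD : desB s = L1 ++ (if Pd s p then [:: p] else [::]) ++ R.
Proof. exact: desB_split. Qed.
Let HD' : desB tau = L1 ++ e :: map succn R.
Proof. exact: desB_ins_lt. Qed.
Let L1lt x : x \in L1 -> x < p.
Proof. by rewrite mem_filter mem_iota => /andP[_ /andP[_]]. Qed.
Let Rgt x : x \in R -> p < x.
Proof. by rewrite mem_filter mem_iota => /andP[_ /andP[]]. Qed.
Let ep : p <= e <= p.+1.
Proof. by rewrite /e; case: a => /=; lia. Qed.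

Lemma c_lt j : j < p -> count (fun d => j <= d) (desB tau) =
   count (fun d => j <= d) (desB s) + ~~ Pd s p.
Proof.
move=> hj; rewrite HD HD' !count_cat /= count_map.
rewrite (countT R (fun d => j <= d)); last by move=> x /Rgt; lia.
rewrite (countT R (preim succn _)); last by move=> x /Rgt /=; lia.
have -> : j <= e by move: ep; lia.
have hjp : j <= p by apply: ltnW.
case: (Pd s p) => /=; rewrite ?hjp /=; lia.
Qed.

Lemma c_gt j : p < j -> j \in desB s -> count (fun d => mvf s p al j <= d) (desB tau) =
   (count (fun d => j <= d) (desB s)).+1.
Proof.
move=> hj hjD; rewrite /mvf; have -> : (j < p) = false by lia.
rewrite max_count; last first.
  - apply/hasP; exists e; last by move: ep; lia.
    by rewrite HD' mem_cat inE eqxx orbT.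
  - exact: sorted_desB.
congr (_.+1); rewrite HD HD' !count_cat /= count_map.
rewrite !(count0 L1); try by move=> x /L1lt; lia.
have -> : j < e = false by move: ep; lia.
have -> : count (preim succn (fun d => j.+1 <= d)) R = count (fun d => j <= d) R by apply: eq_count.
have hjp : j <= p = false by lia.
by case: (Pd s p) => /=; rewrite ?hjp.
Qed.


Lemma mv_le j : mvf s p al j <= j.
Proof.
rewrite /mvf; case: ifP => // _.
by apply/bigmax_leqP_seq => d _; rewrite ltnS.
Qed.

Lemma mv_gt j1 j2 : j1 \in S -> j2 \in S -> j1 < j2 -> j1 < mvf s p al j2.
Proof.
move=> h1 h2 h12; rewrite /mvf; case: ifP => // hj2.
have hp2 : p < j2 by move: (negbT hj2); rewrite -leqNgt leq_eqVlt => /orP[/eqP e2|//]; move: pS; rewrite e2 h2.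
case: (ltnP j1 p) => hj1.
  apply: (leq_trans _ (@leq_bigmax_seq _ (desB tau) (fun d => d < j2.+1) (fun d => d) e _ _)).
  - by move: ep; lia.
  - by rewrite HD' mem_cat inE eqxx orbT.
  - by move: ep; lia.
have hp1 : p < j1 by rewrite ltn_neqAle hj1 andbT; apply/eqP => ej; move: pS; rewrite ej h1.
have j1R : j1 \in R.
  move: (sS _ h1); rewrite HD !mem_cat => /or3P[/L1lt|/=|//]; first lia.
  by case: (Pd s p); rewrite ?inE //; move/eqP; lia.
apply: (@leq_bigmax_seq _ (desB tau) (fun d => d < j2.+1) (fun d => d) j1.+1 _ _) => //.
by rewrite HD' mem_cat inE (map_f succn j1R) !orbT.
Qed.

Lemma mv_inj : {in S &, injective (mvf s p al)}.
Proof.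
move=> j1 j2 h1 h2 he; case: (ltngtP j1 j2) => // hlt'.
  by move: (mv_gt _ _ h1 h2 hlt') (mv_le j1); rewrite he; lia.
by move: (mv_gt _ _ h2 h1 hlt') (mv_le j2); rewrite he; lia.
Qed.

Lemma fmajB_lt : fmajB tau + (Pd s p) * p.*2 =
  fmajB s + 2 * (p + ~~ a) + 2 * count (fun d => p < d) (desB s) + a.
Proof.
have cR : count (fun d => p < d) (desB s) = size R.
  rewrite HD !count_cat (count0 L1); last by move=> x /L1lt; lia.
  rewrite (countT R) //; case: (Pd s p) => /=; lia.
rewrite cR /fmajB (negB_ins _ _ _ _ hlt) HD HD' !big_cat !big_cons sum_succ2 /e.
case: (Pd s p); case: a; rewrite /= ?big_cons ?big_nil /=; lia.
Qed.

Lemma core_lt : fmajP tau (undup [seq mvf s p al j | j <- S]) =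
  (fmajP s S + (2 * (p + ~~ a) + 2 * count (fun d => p < d) (desB s) + a)%N%:Z
   - ((Pd s p) * p.*2)%N%:Z
   - (2 * (~~ Pd s p * count (fun j => j < p) S + count (fun j => p < j) S))%N%:Z)%R.
Proof.
have hu : uniq [seq mvf s p al j | j <- S] by rewrite (map_inj_in_uniq mv_inj).
rewrite (undup_id hu) /fmajP (undup_id hu) (undup_id uS) big_map.
rewrite (@sum_shift S (fun j => count (fun d => mvf s p al j <= d) (desB tau))
   (fun j => count (fun d => j <= d) (desB s)) (fun j => if j < p then (~~ Pd s p : nat) else 1)); last first.
  move=> j hj; case: ifP => hjp.
    by rewrite /mvf hjp c_lt.
  rewrite c_gt ?addn1 //; last exact: sS.
  rewrite ltn_neqAle leqNgt hjp andbT; apply/eqP => ej; move: pS; rewrite ej hj //.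
rewrite sum_delta //.
have := fmajB_lt.
move: (fmajB tau) (fmajB s) (\sum_(j <- S) _)%R => X Y Z.
case: (Pd s p); case: a => /=; lia.
Qed.

End Core.

Lemma desB_lt s x : x \in desB s -> x < size s.
Proof. by rewrite desBE mem_filter mem_iota => /andP[_ /andP[]]. Qed.

Section CoreEq.
Variables (s : seq int) (S : seq nat) (al : int) (a : bool).
Hypothesis uS : uniq S.
Hypothesis sS : {subset S <= desB s}.
Hypothesis hlt : forall i, (al < pi_at s i)%R = a.
Hypothesis hgt : forall i, (pi_at s i < al)%R = ~~ a.
Let p := size s.
Let tau := take p s ++ al :: drop p s.

Lemma core_eq : fmajP tau (undup [seq mvf s p al j | j <- S]) =
  (fmajP s S + (a * (2 * p + 1))%N%:Z - (2 * a * size S)%N%:Z)%R.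
Proof.
have HD' : desB tau = desB s ++ (if a then [:: p] else [::]).
  by rewrite (desB_ins_eq _ _ _ _ hlt (erefl p)) desBE.
have hm : [seq mvf s p al j | j <- S] = S.
  rewrite -[RHS]map_id; apply/eq_in_map => j hj.
  by rewrite /mvf (desB_lt _ _ (sS _ hj)).
rewrite hm /fmajP !(undup_id uS).
rewrite (@sum_shift S (fun j => count (fun d => j <= d) (desB tau))
   (fun j => count (fun d => j <= d) (desB s)) (fun j => a)); last first.
  move=> j hj; rewrite HD' count_cat; have := desB_lt _ _ (sS _ hj); rewrite -/p.
  by case: a => /=; lia.
have -> : \sum_(j <- S) a = a * size S.
  by elim: (S) => [|x l IH]; rewrite ?big_nil ?big_cons ?IH /=; lia.
have hf : fmajB tau = fmajB s + a * p.*2 + a.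
  rewrite /fmajB (negB_ins _ _ _ _ hlt) HD' big_cat; case: a; rewrite /= ?big_cons ?big_nil /=; lia.
rewrite hf; move: (fmajB s) (\sum_(j <- S) _)%R => X Z.
case: a => /=; lia.
Qed.
End CoreEq.

Lemma count_gt_nth (L : seq nat) j : sorted ltn L -> j < size L ->
  count (fun d => nth 0 L j < d) L = size L - j.+1.
Proof.
elim: L j => [|x L IH] j //= hs hj.
have hall : all (fun y => x < y) L := order_path_min ltn_trans hs.
have sL : sorted ltn L by apply: path_sorted hs.
case: j hj => [|j] hj /=.
  rewrite ltnn (countT L) //; first lia.
  by move=> y hy; move/allP: hall; apply.
have hy : x < nth 0 L j by move/allP: hall; apply; apply: mem_nth; exact: hj.
have -> : nth 0 L j < x = false by lia.
rewrite IH //; lia.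
Qed.

Lemma count_lt_nth' (L : seq nat) j : sorted ltn L -> j < size L ->
  count (fun d => d < nth 0 L j) L = j.
Proof.
elim: L j => [|x L IH] j //= hs hj.
have hall : all (fun y => x < y) L := order_path_min ltn_trans hs.
have sL : sorted ltn L by apply: path_sorted hs.
case: j hj => [|j] hj /=.
  rewrite ltnn (count0 L) //; move=> y hy; move/allP: hall => /(_ y hy); lia.
have hy : x < nth 0 L j by move/allP: hall; apply; apply: mem_nth; exact: hj.
rewrite hy IH //; lia.
Qed.

Lemma count_iota_lt p m : p <= m -> count (fun d => d < p) (iota 0 m) = p.
Proof.
move=> h; rewrite -size_filter (filter_iota_ltn 0 h) size_iota //.
Qed.

Local Open Scope ring_scope.
Section Main.
Variables (n k : nat) (s : seq int) (S : seq nat).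
Hypothesis hn : (1 <= n)%N.
Hypothesis hB : in_Bgt n.-1 k s S.

Lemma main_gen (a : bool) i : (i <= n - k - 1)%N ->
  let al := if a then - n%:Z else n%:Z in
  fmajP (phi_ins al i s S).1 (phi_ins al i s S).2 =
  fmajP s S + (if i == 0%N then (if a then ((2 * n - 2 * k)%N%:Z - 1) else 0)
                else ((2 * i)%N%:Z - (a : nat)%:Z)).
Proof.
case: hB => hperm uS sS sk.
have sm : size s = n.-1 by case/andP: hperm => /eqP.
have hb : forall i, (`|pi_at s i| <= n.-1)%N by move=> j; exact: pi_at_bound.
have hlt : forall j, ((if a then - n%:Z else n%:Z) < pi_at s j) = a.
  move=> j; move: (hb j); move: (pi_at s j) => x.
  by case: a => /=; lia.
have hgt : forall j, (pi_at s j < (if a then - n%:Z else n%:Z)) = ~~ a.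
  move=> j; move: (hb j); move: (pi_at s j) => x; clear hlt.
  by case: a => /=; lia.
move=> hi al.
rewrite /phi_ins /=.
have uD : uniq (desB s) := sorted_uniq ltn_trans ltnn (sorted_desB s).
have DI : {subset desB s <= iota 0 (size s)}.
  by move=> x; rewrite desBE mem_filter => /andP[].
have cS : count (fun x => x \in S) (desB s) = k.
  have := cnt_sub S (desB s) predT uS uD sS; rewrite count_predT sk => <-.
  by apply: eq_count.
have cD : count (fun x => x \in desB s) (iota 0 (size s)) = size (desB s).
  have := cnt_sub (desB s) (iota 0 (size s)) predT uD (iota_uniq 0 _) DI.
  rewrite count_predT => <-; by apply: eq_count.
have rm : (size (desB s) <= size s)%N by rewrite desBE size_filter -{2}(size_iota 0 (size s)) count_size.
have kr : (k <= size (desB s))%N by rewrite -cS count_size.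
case: (posnP i) => [-> | hi0].
  apply: (eq_trans (core_eq s S al a uS sS hlt hgt)).
  rewrite sk sm /=; case: a {hlt hgt al} => /=; lia.
set LD := [seq p <- desB s | p \notin S].
set N := [seq p <- iota 0 (size s) | p \notin desB s].
have hpos : pos_of_label s S i = nth 0 (rev LD ++ N) i.-1 by case: i hi hi0.
have sLD : size LD = (size (desB s) - k)%N.
  rewrite size_filter -cS -(count_predC (fun x => x \in S) (desB s)) addKn.
  by apply: eq_count.
have sN : size N = (size s - size (desB s))%N.
  rewrite size_filter; have := count_predC (fun x => x \in desB s) (iota 0 (size s)).
  have E : count (fun p => p \notin desB s) (iota 0 (size s)) = count (predC (fun x => x \in desB s)) (iota 0 (size s)) by apply: eq_count.
  rewrite size_iota cD E; lia.
have iz : (i == 0%N) = false by lia.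
rewrite hpos nth_cat size_rev.
case: (ltnP i.-1 (size LD)) => hL.
  rewrite nth_rev //.
  set p := nth 0 LD (size LD - (i.-1).+1).
  have pLD : p \in LD by apply: mem_nth; rewrite ltn_subrL /=; apply: leq_ltn_trans hL.
  move: (pLD); rewrite mem_filter => /andP[pS pD].
  have hp : (p < size s)%N := desB_lt _ _ pD.
  have Pp : Pd s p by move: pD; rewrite desBE mem_filter => /andP[].
  have sLDs : sorted ltn LD := sorted_filter ltn_trans _ (sorted_desB s).
  have cgt : count (fun d => p < d)%N LD = i.-1.
    rewrite count_gt_nth //; last by rewrite ltn_subrL /=; apply: leq_ltn_trans hL.
    move: hL; set z := size LD; lia.
  have rgt : count (fun d => p < d)%N (desB s) = (count (fun d => p < d)%N LD + count (fun d => p < d)%N S)%N.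
    rewrite (count_split _ _ (fun d => d \in S)) (cnt_sub S (desB s) _ uS uD sS) addnC; congr addn.
    by rewrite /LD [RHS]count_filter; apply: eq_count.
  apply: (eq_trans (core_lt s S p al a uS sS pS hlt hgt hp)).
  rewrite Pp rgt cgt /=.
  case: a {hlt hgt al} => /=; lia.
set j' := (i.-1 - size LD)%N.
set p := nth 0 N j'.
have hj' : (j' < size N)%N by rewrite /j'; lia.
have pN : p \in N by apply: mem_nth.
move: (pN); rewrite mem_filter mem_iota => /andP[pD /andP[_ hp]].
have hp' : (p < size s)%N by lia.
have Pp : Pd s p = false.
  apply/negP => h; move: pD; rewrite desBE mem_filter h mem_iota /=; lia.
have pS : p \notin S by apply/negP => /sS; rewrite (negbTE pD).
have sN' : sorted ltn N := sorted_filter ltn_trans _ (iota_ltn_sorted 0 _).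
have clt : count (fun d => d < p)%N N = j' := count_lt_nth' N j' sN' hj'.
have cD1 : (count (fun d => d < p)%N (desB s) + count (fun d => d < p)%N N = p)%N.
  rewrite desBE /N !count_filter.
  rewrite -{3}(count_iota_lt p (size s)) ?(ltnW hp') // (count_split _ (fun d => d < p)%N (Pd s)).
  congr addn; apply: eq_in_count => x; rewrite mem_iota /= => hx //.
  by rewrite desBE mem_filter mem_iota hx /= andbT.
have cD2 : (count (fun d => p < d)%N (desB s) + count (fun d => d < p)%N (desB s) = size (desB s))%N.
  rewrite -(count_predC (fun d => p < d)%N); congr addn; apply: eq_in_count => x hx /=.
  have : x != p by apply/eqP => ex; move: pD; rewrite -ex hx.
  lia.
have cS2 : (count (fun j => j < p)%N S + count (fun j => p < j)%N S = k)%N.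
  rewrite -sk addnC -(count_predC (fun d => p < d)%N); congr addn; apply: eq_in_count => x hx /=.
  have : x != p by apply/eqP => ex; move: pS; rewrite -ex hx.
  lia.
apply: (eq_trans (core_lt s S p al a uS sS pS hlt hgt hp')).
rewrite Pp /=.
move: cD1 cD2 cS2 clt sLD sN hL hi hj' rm kr sm hn.
move: (count _ (desB s)) (count _ (desB s)) (count _ N) (count _ S) (count _ S) => c1 c2 c3 c4 c5.
rewrite /j'; clearbody p; move: (size LD) (size N) (size (desB s)) (size s) => zL zN zD zs.
have [q ->] : {q : nat | p = q} by exists p.
case: a {hlt hgt al} => /=; lia.
Qed.
End Main.
Local Open Scope ring_scope.

Theorem lemma2p5 (n k : nat) (s : seq int) (S : seq nat) :
  (1 <= n)%N -> (k <= n.-1)%N -> in_Bgt n.-1 k s S ->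
  [/\ (forall i : nat, (i <= n - k - 1)%N ->
         fmajP (phi_ins (n%:Z) i s S).1 (phi_ins (n%:Z) i s S).2
         = fmajP s S + (2 * i)%N%:Z),
      (forall i : nat, (1 <= i)%N -> (i <= n - k - 1)%N ->
         fmajP (phi_ins (- n%:Z) i s S).1 (phi_ins (- n%:Z) i s S).2
         = fmajP s S + (2 * i)%N%:Z - 1)
    & fmajP (phi_ins (- n%:Z) 0 s S).1 (phi_ins (- n%:Z) 0 s S).2
         = fmajP s S + (2 * n - 2 * k)%N%:Z - 1].
Proof.
move=> hn hk hB; split.
- move=> i hi; rewrite (main_gen _ _ _ _ hn hB false _ hi).
  by case: (posnP i) => [->|h] /=; rewrite ?muln0 ?subr0.
- move=> i h1 hi; rewrite (main_gen _ _ _ _ hn hB true _ hi).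
  by rewrite (negbTE (lt0n_neq0 h1)) /= addrA.
- have h0 : (0 <= n - k - 1)%N by [].
  by rewrite (main_gen _ _ _ _ hn hB true _ h0) /= addrA.
Qed.
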